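(* Let $\mathcal{M}$ be a nonempty bounded convex subset of a normed space $\mathcal{E}$ and let $T\colon\mathcal{M}\to\mathcal{M}$ be a $\lambda$-contraction (i.e. $\|Tx-Ty\|\le\lambda\|x-y\|$ for all $x,y\in\mathcal{M}$) with $\lambda\in(0,1)$. Then there exists a sequence $(x_n)_{n\in\mathbb{N}}$ in $\mathcal{M}$ such that for all $n,m\in\mathbb{N}$, $$\|x_n-T(x_n)\|<\frac{1-\lambda}{n}(1+\operatorname{diam}\mathcal{M})\quad\text{and}\quad\|x_n-x_m\|\le\Big(\frac1n+\frac1m\Big)(1+\operatorname{diam}\mathcal{M}).$$ *)

(* Defs.v *)
From HB Require Import structures.
From mathcomp Require Import all_boot all_order all_algebra.
From mathcomp Require Import all_classical all_reals all_analysis.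
Set Implicit Arguments. Unset Strict Implicit. Unset Printing Implicit Defensive.
Import Order.TTheory GRing.Theory Num.Theory.
Import numFieldNormedType.Exports.
Local Open Scope classical_set_scope.
Local Open Scope ring_scope.

Definition diam (R : realType) (E : normedModType R) (A : set E) : R :=
  sup [set `|x - y| | x in A & y in A].

(* Main.v *)
Require Import Defs.
From HB Require Import structures.
From mathcomp Require Import all_boot all_order all_algebra.
From mathcomp Require Import all_classical all_reals all_analysis.
From mathcomp Require Import lra.
Import Order.TTheory GRing.Theory Num.Theory.
Import numFieldNormedType.Exports.
Local Open Scope classical_set_scope.
Local Open Scope ring_scope.

Lemma geo_small (R : realType) (lambda eps : R) : 0 < lambda < 1 -> 0 < eps ->
  exists k : nat, lambda ^+ k < eps.
Proof.
move=> /andP[l0 l1] e0.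
have : geometric 1 lambda @ \oo --> (0 : R^o).
  by apply: cvg_geometric; rewrite ger0_norm // ltW.
move=> /(cvgr0_norm_lt (fun _ => _ : R^o)) /(_ eps e0) [N _ HN].
exists N; have := HN N (leqnn N); rewrite /= mul1r ger0_norm //.
exact: exprn_ge0 (ltW l0).
Qed.

Theorem lemma3p4 (R : realType) (E : normedModType R) (M : set E)
  (T : E -> E) (lambda : R) :
  M !=set0 -> bounded_set M -> convex_set (M : set (convex_lmodType E)) ->
  (forall x, M x -> M (T x)) ->
  0 < lambda < 1 ->
  (forall x y, M x -> M y -> `|T x - T y| <= lambda * `|x - y|) ->
  exists u : nat -> E,
    (forall n, M (u n)) /\
    (forall n m : nat, (0 < n)%N -> (0 < m)%N ->
       `|u n - T (u n)| < (1 - lambda) / n%:R * (1 + diam M) /\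
       `|u n - u m| <= (n%:R^-1 + m%:R^-1) * (1 + diam M)).
Proof.
move=> [x0 Mx0] Mb _ MT /[dup] lam /andP[l0 l1] HT.
case: Mb => r [_ /(_ (r + 1))] Hr.
have {}Hr : forall x, M x -> `|x| <= r + 1.
  by apply: Hr; rewrite ltrDl.
set d := diam M.
have Hd : forall a b, M a -> M b -> `|a - b| <= d.
  move=> a b Ma Mb; apply: sup_upper_bound; last by exists a => //; exists b.
  split; first by exists `|x0 - x0|; exists x0 => //; exists x0.
  exists ((r + 1) + (r + 1)) => _ [a' Ma' [b' Mb' <-]].
  apply: le_trans (ler_normB _ _) _; apply: lerD; exact: Hr.
have d0 : 0 <= d by apply: le_trans (Hd x0 x0 Mx0 Mx0); rewrite subrr normr0.
have Mit : forall k a, M a -> M (iter k T a).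
  by elim=> [//|k IH] a Ma /=; apply: MT; apply: IH.
have Hit : forall k a b, M a -> M b ->
    `|iter k T a - iter k T b| <= lambda ^+ k * `|a - b|.
  elim=> [|k IH] a b Ma Mb /=; first by rewrite expr0 mul1r.
  apply: le_trans (HT _ _ (Mit _ _ Ma) (Mit _ _ Mb)) _.
  rewrite exprS -mulrA; apply: ler_wpM2l; [exact: ltW | exact: IH].
pose y k := iter k T x0.
have Hkl : forall k l, (k <= l)%N -> `|y k - y l| <= lambda ^+ k * d.
  move=> k l kl; rewrite /y -(subnK kl) addnC iterD.
  apply: le_trans (Hit _ _ _ Mx0 (Mit _ _ Mx0)) _.
  apply: ler_wpM2l; [by rewrite exprn_ge0 // ltW | exact: Hd Mx0 (Mit _ _ Mx0)].
have Hkl2 : forall k l, `|y k - y l| <= lambda ^+ (minn k l) * d.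
  move=> k l; case: (leqP k l) => kl.
    by apply: Hkl.
  by rewrite -normrN opprB; apply: Hkl; apply: ltnW.
have : forall n : nat, exists k : nat, (0 < n)%N -> lambda ^+ k < (1 - lambda) / n%:R.
  move=> n; case: n => [|n]; first by exists 0%N.
  have [k Hk] := @geo_small R lambda ((1 - lambda) / n.+1%:R) lam
    ltac:(by rewrite divr_gt0 // subr_gt0).
  by exists k.
move=> /choice [kf Hkf].
exists (fun n => y (kf n)); split; first by move=> n; apply: Mit.
move=> n m n0 m0.
have Hn := Hkf n n0; have Hm := Hkf m m0.
have nR : 0 < n%:R :> R by rewrite ltr0n.
have mR : 0 < m%:R :> R by rewrite ltr0n.
have ni : 0 < n%:R^-1 :> R by rewrite invr_gt0.
have mi : 0 < m%:R^-1 :> R by rewrite invr_gt0.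
have e1 : (1 - lambda) / n%:R <= n%:R^-1.
  by rewrite ler_pdivrMr // mulVf ?gt_eqF // lerBlDr lerDl ltW.
have e2 : (1 - lambda) / m%:R <= m%:R^-1.
  by rewrite ler_pdivrMr // mulVf ?gt_eqF // lerBlDr lerDl ltW.
have en : 0 < (1 - lambda) / n%:R by rewrite divr_gt0 // subr_gt0.
have d1 : d < 1 + d by rewrite ltrDr.
split.
  have -> : T (y (kf n)) = y (kf n).+1 by [].
  apply: le_lt_trans (Hkl _ _ (leqnSn _)) _.
  apply: (@le_lt_trans _ _ ((1 - lambda) / n%:R * d)).
    by apply: ler_wpM2r => //; apply: ltW.
  by rewrite ltr_pM2l.
have key : forall a : R, a <= n%:R^-1 \/ a <= m%:R^-1 -> a * d <= (n%:R^-1 + m%:R^-1) * (1 + d).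
  move=> a ha; apply: (@le_trans _ _ ((n%:R^-1 + m%:R^-1) * d)); last first.
    by apply: ler_wpM2l; [apply: addr_ge0; apply: ltW | apply: ltW].
  apply: ler_wpM2r => //.
  case: ha => ha; apply: le_trans ha _; [by rewrite lerDl ltW | by rewrite lerDr ltW].
apply: le_trans (Hkl2 _ _) _; apply: key.
case: (leqP (kf n) (kf m)) => kl.
  by left; apply: le_trans e1; apply: ltW.
by right; apply: le_trans e2; apply: ltW.
Qed.
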